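(* Let $G_{\mathcal C}(A)$ be a two-player zero-sum complex game with $A=(a_{ij})\in\mathbb{C}^{m\times n}$ and strategy arguments $\alpha_0,\beta_0\in(0,\tfrac{\pi}{2})$. Then $G_{\mathcal C}(A)$ has a complex Nash equilibrium $(z^0,w^0)$ in which both $z^0$ and $w^0$ are equalizing strategies if and only if both of the following systems have at least one solution: $$\text{(I)}\quad \sum_{i=1}^m\overline{z_i}\,a_{ij}=\eta\ (j=1,\dots,n),\qquad \sum_{i=1}^m\overline{z_i}=1,\qquad \overline{z_i}=0\text{ or }|\arg\overline{z_i}|\le\alpha_0\ (i=1,\dots,m),$$ in unknowns $z\in\mathbb{C}^m$, $\eta\in\mathbb{C}$; $$\text{(II)}\quad \sum_{j=1}^n a_{ij}w_j=\theta\ (i=1,\dots,m),\qquad \sum_{j=1}^n w_j=1,\qquad w_j=0\text{ or }|\arg w_j|\le\beta_0\ (j=1,\dots,n),$$ in unknowns $w\in\mathbb{C}^n$, $\theta\in\mathbb{C}$. Moreover, if (I) and (II) have solutions, then $\mathrm{Re}(\eta)=\mathrm{Re}(\theta)=v_A$, the value of the game.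
   Context: For $\gamma\in(0,\tfrac{\pi}{2})$ and $p\ge 1$ let $S^p_\gamma=\{z\in\mathbb{C}^p:\ \text{for each }k,\ z_k=0\text{ or }|\arg z_k|\le\gamma,\ \sum_{k=1}^p z_k=1\}$ ($\arg$ the principal argument in $(-\pi,\pi]$). Its extreme points (''pure strategies'') are $d^1,\dots,d^{p^2}$, where $d^k=e^k$ (standard basis vector) for $k\le p$, and $d^{p+1},\dots,d^{p^2}$ are the $p(p-1)$ vectors having exactly two nonzero coordinates, one equal to $\tfrac12+bi$ and another equal to $\tfrac12-bi$, with $b=\tfrac12\tan\gamma$. The two-player zero-sum complex game $G_{\mathcal C}(A)$: player I chooses $z\in S^m_{\alpha_0}$, player II chooses $w\in S^n_{\beta_0}$, player I receives $\mathrm{Re}(z^*Aw)$ and player II receives $-\mathrm{Re}(z^*Aw)$ ($z^*$ the conjugate transpose). Pure strategies: $d^i$, $i\in\mathcal I=\{1,\dots,m^2\}$, extreme points of $S^m_{\alpha_0}$; $d^j$, $j\in\mathcal J=\{1,\dots,n^2\}$, extreme points of $S^n_{\beta_0}$. A strategy $z\in S^m_{\alpha_0}$ of player I is equalizing with equalizing constant $c\in\mathbb{R}$ if $\mathrm{Re}(z^*Ad^j)=c$ for all $j\in\mathcal J$; a strategy $w\in S^n_{\beta_0}$ of player II is equalizing with equalizing constant $c\in\mathbb{R}$ if $\mathrm{Re}((d^i)^*Aw)=c$ for all $i\in\mathcal I$. A pair $(z^0,w^0)\in S^m_{\alpha_0}\times S^n_{\beta_0}$ is a complex Nash equilibrium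 if $\mathrm{Re}(z^*Aw^0)\le\mathrm{Re}((z^0)^*Aw^0)\le\mathrm{Re}((z^0)^*Aw)$ for all $z\in S^m_{\alpha_0}$, $w\in S^n_{\beta_0}$; the value is $v_A=\mathrm{Re}((z^0)^*Aw^0)$. *)

(* Defs.v *)
From Stdlib Require Import Reals.
From Coquelicot Require Import Coquelicot.
Open Scope R_scope.

(* Principal argument of a complex number, with values in (-PI, PI];
   Carg 0 = 0 (never used: the strategy conditions treat 0 separately). *)
Definition Carg (z : C) : R :=
  let x := Re z in let y := Im z in
  match Rlt_dec 0 x with
  | left _ => atan (y / x)
  | right _ =>
    match Rlt_dec x 0 with
    | left _ => match Rle_dec 0 y with
                | left _ => atan (y / x) + PI
                | right _ => atan (y / x) - PI
                end
    | right _ => match Rlt_dec 0 y with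
                 | left _ => PI / 2
                 | right _ => match Rlt_dec y 0 with
                              | left _ => - (PI / 2)
                              | right _ => 0
                              end
                 end
    end
  end.

Fixpoint csum (n : nat) (f : nat -> C) : C :=
  match n with
  | O => RtoC 0
  | S k => Cplus (csum k f) (f k)
  end.

(* Vectors of C^p are represented as functions nat -> C, only the
   coordinates 0..p-1 being meaningful; matrices as nat -> nat -> C. *)

Definition arg_ok (gamma : R) (c : C) : Prop :=
  c = RtoC 0 \/ Rabs (Carg c) <= gamma.

Definition S_set (p : nat) (gamma : R) (z : nat -> C) : Prop :=
  (forall k, (k < p)%nat -> arg_ok gamma (z k)) /\ csum p z = RtoC 1.

(* Pure strategies (extreme points) d of S^p_gamma:
   standard basis vectors e^k, and vectors with exactly two nonzero
   coordinates, 1/2 + b i at k and 1/2 - b i at l (k <> l), b = tan(gamma)/2. *)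
Definition pure_strategy (p : nat) (gamma : R) (d : nat -> C) : Prop :=
  (exists k, (k < p)%nat /\
     forall t, (t < p)%nat -> d t = (if Nat.eqb t k then RtoC 1 else RtoC 0))
  \/
  (exists k l, (k < p)%nat /\ (l < p)%nat /\ k <> l /\
     forall t, (t < p)%nat ->
       d t = (if Nat.eqb t k then (1/2, tan gamma / 2)
              else if Nat.eqb t l then (1/2, - (tan gamma / 2))
              else RtoC 0)).

Definition payoff (m n : nat) (A : nat -> nat -> C) (z w : nat -> C) : R :=
  Re (csum m (fun i => Cmult (Cconj (z i)) (csum n (fun j => Cmult (A i j) (w j))))).

Definition equalizing_I (m n : nat) (alpha0 beta0 : R) (A : nat -> nat -> C)
  (z : nat -> C) : Prop :=
  S_set m alpha0 z /\
  exists c : R, forall d, pure_strategy n beta0 d -> payoff m n A z d = c.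

Definition equalizing_II (m n : nat) (alpha0 beta0 : R) (A : nat -> nat -> C)
  (w : nat -> C) : Prop :=
  S_set n beta0 w /\
  exists c : R, forall d, pure_strategy m alpha0 d -> payoff m n A d w = c.

Definition complex_NE (m n : nat) (alpha0 beta0 : R) (A : nat -> nat -> C)
  (z0 w0 : nat -> C) : Prop :=
  S_set m alpha0 z0 /\ S_set n beta0 w0 /\
  (forall z, S_set m alpha0 z -> payoff m n A z w0 <= payoff m n A z0 w0) /\
  (forall w, S_set n beta0 w -> payoff m n A z0 w0 <= payoff m n A z0 w).

Definition system_I (m n : nat) (alpha0 : R) (A : nat -> nat -> C)
  (z : nat -> C) (eta : C) : Prop :=
  (forall j, (j < n)%nat -> csum m (fun i => Cmult (Cconj (z i)) (A i j)) = eta) /\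
  csum m (fun i => Cconj (z i)) = RtoC 1 /\
  (forall i, (i < m)%nat -> arg_ok alpha0 (Cconj (z i))).

Definition system_II (m n : nat) (beta0 : R) (A : nat -> nat -> C)
  (w : nat -> C) (theta : C) : Prop :=
  (forall i, (i < m)%nat -> csum n (fun j => Cmult (A i j) (w j)) = theta) /\
  csum n w = RtoC 1 /\
  (forall j, (j < n)%nat -> arg_ok beta0 (w j)).

(* Main.v *)
Require Import Defs.
From Stdlib Require Import Reals Lra Lia.
From Coquelicot Require Import Coquelicot.
Open Scope R_scope.

Lemma csum_ext n f g : (forall k, (k < n)%nat -> f k = g k) -> csum n f = csum n g.
Proof. induction n; simpl; intros H; auto. rewrite IHn by (intros; apply H; lia). rewrite H by lia. auto. Qed.

Lemma csum_plus n f g : csum n (fun i => Cplus (f i) (g i)) = Cplus (csum n f) (csum n g).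
Proof. induction n; simpl. unfold RtoC; apply injective_projections; simpl; ring.
  rewrite IHn. ring. Qed.

Lemma csum_scal n c f : csum n (fun i => Cmult c (f i)) = Cmult c (csum n f).
Proof. induction n; simpl. unfold RtoC, Cmult; apply injective_projections; simpl; ring.
  rewrite IHn. ring. Qed.

Lemma csum_scal_r n c f : csum n (fun i => Cmult (f i) c) = Cmult (csum n f) c.
Proof. rewrite Cmult_comm, <- (csum_scal n c f). apply csum_ext; intros; ring. Qed.

Lemma csum_conj n f : csum n (fun i => Cconj (f i)) = Cconj (csum n f).
Proof. induction n; simpl. unfold RtoC, Cconj; apply injective_projections; simpl; ring.
  rewrite IHn, Cplus_conj. auto. Qed.

Lemma csum_swap m n F : csum m (fun i => csum n (fun j => F i j)) = csum n (fun j => csum m (fun i => F i j)).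
Proof. induction m; simpl.
  - induction n; simpl; auto. rewrite <- IHn. unfold RtoC; apply injective_projections; simpl; ring.
  - rewrite IHm, <- csum_plus. auto. Qed.

Lemma csum_point p k g : (forall t, (t < p)%nat -> t <> k -> g t = RtoC 0) ->
  csum p g = if Nat.ltb k p then g k else RtoC 0.
Proof. induction p; simpl; intros H; auto.
  rewrite IHp by (intros; apply H; lia).
  destruct (Nat.ltb_spec k p); destruct (Nat.ltb_spec k (S p)); try lia.
  - rewrite (H p) by lia. unfold RtoC; apply injective_projections; simpl; ring.
  - assert (k = p) by lia. subst. unfold RtoC; apply injective_projections; simpl; ring.
  - rewrite (H p) by lia. unfold RtoC; apply injective_projections; simpl; ring.
Qed.

Lemma arg_ok_conj g c : 0 <= g < PI/2 -> arg_ok g c -> arg_ok g (Cconj c).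
Proof.
  intros Hg. destruct c as [x y]. unfold arg_ok, Carg, Cconj, Re, Im; simpl.
  intros [H|H].
  - left. injection H; intros -> ->. unfold RtoC. f_equal; ring.
  - right. pose proof PI_RGT_0.
    destruct (Rlt_dec 0 x).
    + replace (-y/x) with (-(y/x)) by (field; lra). rewrite atan_opp, Rabs_Ropp. exact H.
    + destruct (Rlt_dec x 0).
      * pose proof (atan_bound (y/x)). exfalso.
        destruct (Rle_dec 0 y); unfold Rabs in H; destruct Rcase_abs in H; lra.
      * destruct (Rlt_dec 0 y); [unfold Rabs in H; destruct Rcase_abs in H; lra|].
        destruct (Rlt_dec y 0); [unfold Rabs in H; destruct Rcase_abs in H; lra|].
        destruct (Rlt_dec 0 (-y)); [lra|]. destruct (Rlt_dec (-y) 0); [lra|]. exact H.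
Qed.

Lemma csum_one p k a g : (k < p)%nat ->
  (forall t, (t < p)%nat -> g t = if Nat.eqb t k then a else RtoC 0) -> csum p g = a.
Proof. intros Hk Hg. rewrite (csum_point p k).
  - destruct (Nat.ltb_spec k p); try lia. rewrite Hg by auto. rewrite Nat.eqb_refl; auto.
  - intros t Ht Htk. rewrite Hg by auto. apply Nat.eqb_neq in Htk. rewrite Htk. auto.
Qed.

Lemma csum_two p k l a b g : (k < p)%nat -> (l < p)%nat -> k <> l ->
  (forall t, (t < p)%nat -> g t = if Nat.eqb t k then a else if Nat.eqb t l then b else RtoC 0) ->
  csum p g = Cplus a b.
Proof. intros Hk Hl Hkl Hg.
  rewrite (csum_ext p _ (fun t => Cplus (if Nat.eqb t k then a else RtoC 0)
                                  (if Nat.eqb t l then b else RtoC 0))).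
  - rewrite csum_plus. rewrite (csum_one p k a), (csum_one p l b); auto.
  - intros t Ht. rewrite Hg by auto.
    destruct (Nat.eqb_spec t k); destruct (Nat.eqb_spec t l); subst; try lia;
    unfold RtoC; apply injective_projections; simpl; ring.
Qed.

Lemma csum_pure_one p gamma d : pure_strategy p gamma d -> csum p d = RtoC 1.
Proof.
  intros [[k [Hk Hd]]|[k [l [Hk [Hl [Hkl Hd]]]]]].
  - apply (csum_one p k); auto.
  - rewrite (csum_two p k l _ _ d Hk Hl Hkl Hd).
    unfold RtoC, Cplus; apply injective_projections; simpl; field.
Qed.

Definition ucol (m : nat) (A : nat -> nat -> C) (z : nat -> C) (j : nat) : C :=
  csum m (fun i => Cmult (Cconj (z i)) (A i j)).
Definition vrow (n : nat) (A : nat -> nat -> C) (w : nat -> C) (i : nat) : C :=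
  csum n (fun j => Cmult (A i j) (w j)).

Lemma payoff_col m n A z w : payoff m n A z w = Re (csum n (fun j => Cmult (ucol m A z j) (w j))).
Proof. unfold payoff, ucol. f_equal.
  rewrite (csum_ext m _ (fun i => csum n (fun j => Cmult (Cmult (Cconj (z i)) (A i j)) (w j)))).
  - rewrite csum_swap. apply csum_ext; intros. rewrite <- csum_scal_r. apply csum_ext; intros; ring.
  - intros. rewrite <- csum_scal. apply csum_ext; intros; ring.
Qed.

Lemma Re_mult1 c : Re (Cmult c (RtoC 1)) = Re c.
Proof. destruct c; unfold Re, Cmult, RtoC; simpl; ring. Qed.

Lemma P1 m n alpha0 A z eta w : system_I m n alpha0 A z eta -> csum n w = RtoC 1 ->
  payoff m n A z w = Re eta.
Proof. intros [H _] Hw. rewrite payoff_col.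
  rewrite (csum_ext n _ (fun j => Cmult eta (w j))) by (intros; unfold ucol; rewrite H by auto; auto).
  rewrite csum_scal, Hw. apply Re_mult1. Qed.

Lemma P2 m n beta0 A w theta z : system_II m n beta0 A w theta -> csum m z = RtoC 1 ->
  payoff m n A z w = Re theta.
Proof. intros [H _] Hz. unfold payoff.
  rewrite (csum_ext m _ (fun i => Cmult (Cconj (z i)) theta)) by (intros; rewrite H by auto; auto).
  rewrite csum_scal_r, csum_conj, Hz. destruct theta; unfold Re, Cmult, Cconj, RtoC; simpl; ring. Qed.

Lemma Cconj_conj' c : Cconj (Cconj c) = c.
Proof. destruct c; unfold Cconj; simpl; f_equal; ring. Qed.

Lemma sysI_S m n alpha0 A z eta : 0 <= alpha0 < PI/2 -> system_I m n alpha0 A z eta -> S_set m alpha0 z.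
Proof. intros Ha [_ [Hs Hok]]. split.
  - intros k Hk. rewrite <- (Cconj_conj' (z k)). apply arg_ok_conj; auto.
  - rewrite <- (Cconj_conj' (csum m z)), <- csum_conj, Hs. unfold Cconj, RtoC; simpl; f_equal; ring.
Qed.

Lemma sysII_S m n beta0 A w theta : system_II m n beta0 A w theta -> S_set n beta0 w.
Proof. intros [_ [Hs Hok]]. split; auto. Qed.

Ltac csolve := unfold Cconj, Cmult, Cplus, RtoC; apply injective_projections; simpl; ring.

Lemma fI m n alpha0 beta0 A z0 : 0 < beta0 < PI/2 -> 0 <= alpha0 < PI/2 ->
  equalizing_I m n alpha0 beta0 A z0 -> exists z eta, system_I m n alpha0 A z eta.
Proof.
  intros Hb Ha [HS [c Hc]].
  assert (Hre: forall k, (k<n)%nat -> Re (ucol m A z0 k) = c).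
  { intros k Hk. rewrite <- (Hc (fun t => if Nat.eqb t k then RtoC 1 else RtoC 0)).
    - rewrite payoff_col. f_equal. symmetry. apply (csum_one n k); auto.
      intros t Ht. destruct (Nat.eqb_spec t k); subst; csolve.
    - left. exists k. split; auto. }
  exists z0, (ucol m A z0 0%nat). split; [|split].
  - intros j Hj. fold (ucol m A z0 j). destruct (Nat.eq_dec j 0) as [->|Hj0]; [reflexivity|].
    assert (Hbp : 0 < tan beta0 / 2) by (pose proof (tan_gt_0 beta0); lra).
    assert (Hm: payoff m n A z0 (fun t => if Nat.eqb t j then (1/2, tan beta0 / 2)
               else if Nat.eqb t 0 then (1/2, - (tan beta0 / 2)) else RtoC 0) = c).
    { apply Hc. right. exists j, 0%nat. repeat split; auto; lia. }
    rewrite payoff_col in Hm.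
    rewrite (csum_two n j 0 (Cmult (ucol m A z0 j) (1/2, tan beta0 / 2))
                (Cmult (ucol m A z0 0%nat) (1/2, - (tan beta0 / 2)))) in Hm; try lia.
    2: { intros t Ht. destruct (Nat.eqb_spec t j); destruct (Nat.eqb_spec t 0); subst; try lia; csolve. }
    pose proof (Hre j Hj) as H1. pose proof (Hre 0%nat ltac:(lia)) as H2.
    revert Hm H1 H2. generalize (ucol m A z0 j) (ucol m A z0 0%nat).
    intros [x1 y1] [x2 y2]. unfold Re, Cmult, Cplus; simpl. intros.
    assert (y1 = y2) by nra. f_equal; lra.
  - rewrite csum_conj, (proj2 HS). csolve.
  - intros i Hi. apply arg_ok_conj; auto. apply HS; auto.
Qed.

Lemma fII m n alpha0 beta0 A w0 : 0 < alpha0 < PI/2 ->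
  equalizing_II m n alpha0 beta0 A w0 -> exists w theta, system_II m n beta0 A w theta.
Proof.
  intros Ha [HS [c Hc]].
  assert (Hre: forall k, (k<m)%nat -> Re (vrow n A w0 k) = c).
  { intros k Hk. rewrite <- (Hc (fun t => if Nat.eqb t k then RtoC 1 else RtoC 0)).
    - unfold payoff. f_equal. symmetry. apply (csum_one m k); auto.
      intros t Ht. fold (vrow n A w0 t). destruct (Nat.eqb_spec t k); subst; csolve.
    - left. exists k. split; auto. }
  exists w0, (vrow n A w0 0%nat). split; [|split].
  - intros j Hj. fold (vrow n A w0 j). destruct (Nat.eq_dec j 0) as [->|Hj0]; [reflexivity|].
    assert (Hbp : 0 < tan alpha0 / 2) by (pose proof (tan_gt_0 alpha0); lra).
    assert (Hm: payoff m n A (fun t => if Nat.eqb t j then (1/2, tan alpha0 / 2)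
               else if Nat.eqb t 0 then (1/2, - (tan alpha0 / 2)) else RtoC 0) w0 = c).
    { apply Hc. right. exists j, 0%nat. repeat split; auto; lia. }
    unfold payoff in Hm.
    rewrite (csum_two m j 0 (Cmult (Cconj (1/2, tan alpha0 / 2)) (vrow n A w0 j))
                (Cmult (Cconj (1/2, - (tan alpha0 / 2))) (vrow n A w0 0%nat))) in Hm; try lia.
    2: { intros t Ht. fold (vrow n A w0 t).
         destruct (Nat.eqb_spec t j); destruct (Nat.eqb_spec t 0); subst; try lia; csolve. }
    pose proof (Hre j Hj) as H1. pose proof (Hre 0%nat ltac:(lia)) as H2.
    revert Hm H1 H2. generalize (vrow n A w0 j) (vrow n A w0 0%nat).
    intros [x1 y1] [x2 y2]. unfold Re, Cmult, Cplus, Cconj; simpl. intros.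
    assert (y1 = y2) by nra. f_equal; lra.
  - apply HS.
  - intros i Hi. apply HS; auto.
Qed.

Theorem theorem7p5 (m n : nat) (A : nat -> nat -> C) (alpha0 beta0 : R)
  (Ha : 0 < alpha0 < PI / 2) (Hb : 0 < beta0 < PI / 2) :
  ((exists z0 w0, complex_NE m n alpha0 beta0 A z0 w0 /\
      equalizing_I m n alpha0 beta0 A z0 /\ equalizing_II m n alpha0 beta0 A w0)
   <->
   ((exists z eta, system_I m n alpha0 A z eta) /\
    (exists w theta, system_II m n beta0 A w theta)))
  /\
  (forall z eta w theta,
     system_I m n alpha0 A z eta -> system_II m n beta0 A w theta ->
     forall z0 w0, complex_NE m n alpha0 beta0 A z0 w0 ->
       Re eta = payoff m n A z0 w0 /\ Re theta = payoff m n A z0 w0).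
Proof.
  assert (Ha' : 0 <= alpha0 < PI/2) by lra.
  split; [split|].
  - intros [z0 [w0 [_ [HI HII]]]]. split; [apply (fI m n alpha0 beta0 A z0) | apply (fII m n alpha0 beta0 A w0)]; auto.
  - intros [[z [eta HsI]] [w [theta HsII]]].
    pose proof (sysI_S _ _ _ _ _ _ Ha' HsI) as HzS.
    pose proof (sysII_S _ _ _ _ _ _ HsII) as HwS.
    assert (E1 : payoff m n A z w = Re eta) by (apply (P1 _ _ _ _ _ _ _ HsI); apply HwS).
    assert (E2 : payoff m n A z w = Re theta) by (apply (P2 _ _ _ _ _ _ _ HsII); apply HzS).
    exists z, w. split; [|split].
    + unfold complex_NE. split; [auto|split; [auto|split]].
      * intros z' Hz'. rewrite (P2 _ _ _ _ _ _ z' HsII) by apply Hz'. lra.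
      * intros w' Hw'. rewrite (P1 _ _ _ _ _ _ w' HsI) by apply Hw'. lra.
    + split; auto. exists (Re eta). intros d Hd.
      apply (P1 _ _ _ _ _ _ _ HsI). eapply csum_pure_one; eauto.
    + split; auto. exists (Re theta). intros d Hd.
      apply (P2 _ _ _ _ _ _ _ HsII). eapply csum_pure_one; eauto.
  - intros z eta w theta HsI HsII z0 w0 [Hz0 [Hw0 [H1 H2]]].
    pose proof (sysI_S _ _ _ _ _ _ Ha' HsI) as HzS.
    pose proof (sysII_S _ _ _ _ _ _ HsII) as HwS.
    assert (E1 : payoff m n A z w = Re eta) by (apply (P1 _ _ _ _ _ _ _ HsI); apply HwS).
    assert (E2 : payoff m n A z w = Re theta) by (apply (P2 _ _ _ _ _ _ _ HsII); apply HzS).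
    assert (E3 : payoff m n A z w0 = Re eta) by (apply (P1 _ _ _ _ _ _ _ HsI); apply Hw0).
    assert (E4 : payoff m n A z0 w = Re theta) by (apply (P2 _ _ _ _ _ _ _ HsII); apply Hz0).
    specialize (H1 z HzS). specialize (H2 w HwS). lra.
Qed.
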